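(* Let $a,b,c\ge 2$ be integers. Then the ring $A=\mathbb{C}[X,Y,Z]/(X^aY^b-Z^c)$ is rigid (this includes the cases where $\gcd(a,b,c)>1$, in which $A$ is not a domain).
   Context: A locally nilpotent derivation (LND) of a $\mathbb{C}$-algebra $A$ is a $\mathbb{C}$-linear derivation $D$ such that every $a\in A$ satisfies $D^n(a)=0$ for some $n$. A ring is rigid if its only LND is the zero derivation. *)

(* Defs.v *)
(* C[X,Y,Z] is modelled as nested univariate polynomials
   {poly {poly {poly F}}} (innermost variable X, middle Y, outer Z), and the
   quotient ring is MathComp's ring quotient by a (classically decided)
   principal ideal. *)
From HB Require Import structures.
From mathcomp Require Import all_boot all_order all_algebra.
From mathcomp Require Import generic_quotient ring_quotient.
From Stdlib Require Import ClassicalEpsilon.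
Set Implicit Arguments. Unset Strict Implicit. Unset Printing Implicit Defensive.
Import Order.TTheory GRing.Theory Num.Theory.
Local Open Scope ring_scope.
Local Open Scope quotient_scope.

Definition is_derivation (F : fieldType) (A : comNzRingType) (iota : F -> A)
  (D : A -> A) : Prop :=
  [/\ forall x y, D (x + y) = D x + D y,
      forall (k : F) x, D (iota k * x) = iota k * D x
    & forall x y, D (x * y) = D x * y + x * D y].

Definition locally_nilpotent (A : comNzRingType) (D : A -> A) : Prop :=
  forall x, exists n : nat, iter n D x = 0.

Definition rigid (F : fieldType) (A : comNzRingType) (iota : F -> A) : Prop :=
  forall D : A -> A, is_derivation iota D -> locally_nilpotent D ->
    forall x, D x = 0.

Section Quot.
Variables (F : fieldType) (a b c : nat).

Definition PR := {poly {poly {poly F}}}.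
Definition varX : PR := ('X%:P)%:P.
Definition varY : PR := ('X)%:P.
Definition varZ : PR := 'X.
Definition const (k : F) : PR := k%:P%:P%:P.

Definition fXYZ : PR := varX ^+ a * varY ^+ b - varZ ^+ c.

Definition in_ideal_f (p : PR) : bool :=
  if excluded_middle_informative (exists h : PR, p = h * fXYZ) then true
  else false.

Definition ideal_f : {pred PR} := fun p => in_ideal_f p.

Lemma in_ideal_fP p : reflect (exists h : PR, p = h * fXYZ) (p \in ideal_f).
Proof.
rewrite unfold_in /= /in_ideal_f.
by case: excluded_middle_informative => H; constructor.
Qed.

Lemma fXYZ_eval1 : fXYZ.[1].[1].[1] = 0.
Proof.
rewrite /fXYZ /varX /varY /varZ !hornerE.
by rewrite ?expr1n ?mulr1 ?subrr ?hornerE.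
Qed.

Lemma ideal_f_closed : idealr_closed ideal_f.
Proof.
split.
- by apply/in_ideal_fP; exists 0; rewrite mul0r.
- apply/in_ideal_fP => -[h Hh].
  have := congr1 (fun p : PR => p.[1].[1].[1]) Hh.
  by rewrite /= !hornerM fXYZ_eval1 !mulr0 !hornerE => /eqP; rewrite oner_eq0.
- move=> r u v /in_ideal_fP [h1 ->] /in_ideal_fP [h2 ->].
  by apply/in_ideal_fP; exists (r * h1 + h2); rewrite mulrDl mulrA.
Qed.

HB.instance Definition _ := isIdealr.Build PR ideal_f ideal_f_closed.

Definition Aring : comNzRingType := {ideal_quot ideal_f}.

Definition iotaA (k : F) : Aring := \pi_(Aring) (const k).

End Quot.

(* Main.v *)
Require Import Defs.
From HB Require Import structures.
From mathcomp Require Import all_boot all_order all_algebra all_field.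
From mathcomp Require Import generic_quotient ring_quotient.
From Stdlib Require Import Lia.
Set Implicit Arguments. Unset Strict Implicit. Unset Printing Implicit Defensive.
Import Order.TTheory GRing.Theory Num.Theory.
Local Open Scope ring_scope.

Section PolyLemmas.
Variable C : numClosedFieldType.
Implicit Types p q g Y : {poly C}.

Lemma deriv0_const p : p^`() = 0 -> p = (p`_0)%:P.
Proof.
move=> H; apply/polyP => i; rewrite coefC; case: i => [|i] //=.
have := congr1 (fun q => q`_i) H; rewrite coef_deriv coef0 => /eqP.
by rewrite mulrn_eq0 /= => /eqP.
Qed.

Lemma deriv_inj p q : p^`() = q^`() -> p.[0] = q.[0] -> p = q.
Proof.
move=> H1 H2; apply/eqP; rewrite -subr_eq0; apply/eqP.
have H : (p - q)^`() = 0 by rewrite derivB H1 subrr.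
by rewrite (deriv0_const H) -horner_coef0 hornerD hornerN H2 subrr.
Qed.

Lemma noroot_const p : (forall t, p.[t] != 0) -> (size p <= 1)%N.
Proof.
move=> H; case: (eqVneq (size p) 1) => [->//|/closed_rootP [t]].
by rewrite /root (negbTE (H t)).
Qed.

Lemma exp_const p n : (0 < n)%N -> (size (p ^+ n) <= 1)%N -> (size p <= 1)%N.
Proof.
move=> hn hs; have := size_exp p n.
have -> : (size (p ^+ n)).-1 = 0%N by case: (size _) hs => [|[|]].
move/esym/eqP; rewrite muln_eq0 (negbTE (lt0n_neq0 hn)) orbF.
by case: (size p) => [|[|]].
Qed.

Lemma derivn_all0 (t0 : C) q : (forall k, q^`(k).[t0] = 0) -> q = 0.
Proof.
move: {2}(size q) (leqnn (size q)) => n; elim: n q => [|n IH] q hs H.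
  by apply/eqP; rewrite -size_poly_eq0 -leqn0.
have H' : q^`() = 0.
  apply: IH => [|k]; last by rewrite -derivSn H.
  case: (eqVneq q 0) => [->|q0]; first by rewrite deriv0 size_poly0.
  by rewrite -ltnS (leq_trans (lt_size_deriv q0) hs).
have h0 := H 0%N; rewrite derivn0 (deriv0_const H') hornerC in h0.
by rewrite (deriv0_const H') h0.
Qed.

Lemma derivn_const (t0 : C) p :
  (forall k, (0 < k)%N -> p^`(k).[t0] = 0) -> p^`() = 0.
Proof. by move=> H; apply: (derivn_all0 (t0 := t0)) => k; rewrite -derivSn H. Qed.

Lemma size1_deriv p : (size p <= 1)%N -> p^`() = 0.
Proof. by move/size1_polyC => ->; rewrite derivC. Qed.

Lemma comp_ode Y g : Y^`() = g \Po Y -> g.[0] = 0 -> Y^`() = 0.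
Proof.
move=> H g0; case: (leqP (size Y) 1) => hY; first exact: size1_deriv.
case: (leqP (size g) 1) => hg.
  by rewrite H (size1_polyC hg) comp_polyC -horner_coef0 g0.
have Y0 : Y != 0 by rewrite -size_poly_gt0 ltnW.
have h1 := lt_size_deriv Y0.
have h2 := size_comp_poly g Y; rewrite -H in h2.
exfalso; move: h1 h2 hg hY.
move: (size Y) (size g) (size Y^`()) => sY sg sd.
move=> /ssrnat.ltP h1 h2 /ssrnat.ltP hg /ssrnat.ltP hY.
have : (sg.-1 * sY.-1 >= sY.-1)%coq_nat.
  apply/ssrnat.leP; rewrite leq_pmull // -subn1 subn_gt0; exact/ssrnat.ltP.
lia.
Qed.


Lemma poly_vanish p : (forall t, p.[t] = 0) -> p = 0.
Proof.
move=> H; apply/eqP; apply/negPn/negP => p0.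
suff : (size [seq (i%:R : C) | i <- iota 0 (size p)] < size p)%N.
  by rewrite size_map size_iota ltnn.
apply: (max_poly_roots p0).
  by apply/allP => t /mapP [i _ ->]; rewrite /root H.
by rewrite map_inj_uniq ?iota_uniq //; exact: (mulrIn (oner_neq0 C)).
Qed.

Lemma ode_zero (X Z G1 H1 G2 H2 : {poly C}) :
  X^`() = X * G1 + Z * H1 -> Z^`() = X * G2 + Z * H2 ->
  X`_0 = 0 -> Z`_0 = 0 -> X = 0 /\ Z = 0.
Proof.
move=> hX hZ X0 Z0.
suff H : forall n i, (i <= n)%N -> X`_i = 0 /\ Z`_i = 0.
  by split; apply/polyP => i; rewrite coef0; case: (H i i (leqnn i)).
elim=> [|n IH] i.
  by rewrite leqn0 => /eqP ->.
rewrite leq_eqVlt => /orP [/eqP ->|]; last by rewrite ltnS; exact: IH.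
have hs : forall (u v G H : {poly C}),
    (forall j, (j <= n)%N -> u`_j = 0 /\ v`_j = 0) -> (u * G + v * H)`_n = 0.
  move=> u v G H hPQ; rewrite coefD !coefM !big1 ?addr0 // => j _.
    by case: (hPQ j (leq_ord j)) => _ ->; rewrite mul0r.
  by case: (hPQ j (leq_ord j)) => -> _; rewrite mul0r.
have e1 := congr1 (fun q => q`_n) hX; have e2 := congr1 (fun q => q`_n) hZ.
rewrite /= coef_deriv hs // in e1; rewrite /= coef_deriv hs // in e2.
by move: e1 e2 => /eqP; rewrite mulrn_eq0 /= => /eqP -> /eqP; rewrite mulrn_eq0 /= => /eqP ->.
Qed.

End PolyLemmas.


Section Basic.
Local Open Scope quotient_scope.
Variable C : numClosedFieldType.
Variables a b c : nat.
Local Notation A := (Aring C a b c).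
Local Notation P := (PR C).
Local Notation f := (fXYZ C a b c).

Definition piA (p : P) : A := \pi_A p.

Lemma piAD p q : piA (p + q) = piA p + piA q. Proof. exact: rmorphD. Qed.
Lemma piAB p q : piA (p - q) = piA p - piA q. Proof. exact: rmorphB. Qed.
Lemma piAN p : piA (- p) = - piA p. Proof. exact: rmorphN. Qed.
Lemma piAM p q : piA (p * q) = piA p * piA q. Proof. exact: rmorphM. Qed.
Lemma piAX p n : piA (p ^+ n) = piA p ^+ n. Proof. exact: rmorphXn. Qed.
Lemma piA1 : piA 1 = 1. Proof. exact: rmorph1. Qed.
Lemma piA0 : piA 0 = 0. Proof. exact: rmorph0. Qed.
Lemma piAn n : piA n%:R = n%:R. Proof. exact: rmorph_nat. Qed.
Lemma piAMn p n : piA (p *+ n) = piA p *+ n. Proof. exact: rmorphMn. Qed.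

Lemma piAE0 (p : P) : (piA p = 0) <-> (exists h, p = h * f).
Proof.
rewrite -piA0; split.
  move/eqP; rewrite -Quotient.idealrBE subr0 => /in_ideal_fP; exact.
by move/in_ideal_fP => H; apply/eqP; rewrite -Quotient.idealrBE subr0.
Qed.

Lemma piAE (p q : P) : (piA p = piA q) <-> (exists h, p - q = h * f).
Proof.
rewrite -piAE0 piAB; split => H; first by rewrite H subrr.
by apply/eqP; rewrite -subr_eq0 H.
Qed.

Definition xA : A := piA (varX C).
Definition yA : A := piA (varY C).
Definition zA : A := piA (varZ C).
Definition io (k : C) : A := @iotaA C a b c k.

Lemma relA : xA ^+ a * yA ^+ b = zA ^+ c.
Proof.
apply/eqP; rewrite -subr_eq0 /xA /yA /zA -!piAX -piAM -piAB.
by apply/eqP/piAE0; exists 1; rewrite mul1r.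
Qed.

Lemma piC (k : C) : piA (const k) = io k.
Proof. by []. Qed.

Lemma PR_ind (Q : P -> Prop) :
  (forall k, Q (const k)) -> (forall p q, Q p -> Q q -> Q (p + q)) ->
  (forall p, Q p -> Q (p * varX C)) -> (forall p, Q p -> Q (p * varY C)) ->
  (forall p, Q p -> Q (p * varZ C)) -> forall p, Q p.
Proof.
move=> HC HD HX HY HZ.
have H0 : Q 0 by have := HC 0; rewrite /const !polyC0.
have Hd : forall d : {poly C}, Q d%:P%:P.
  elim/poly_ind => // d k Hd; rewrite !polyCD !polyCM; apply: HD; last exact: HC.
  exact: HX.
have Hc : forall d : {poly {poly C}}, Q d%:P.
  elim/poly_ind => // d k Hc'; rewrite !polyCD !polyCM; apply: HD => //.
  exact: HY.
elim/poly_ind => // p k Hp; apply: HD => //; exact: HZ.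
Qed.

Lemma pi_surj (u : A) : exists p, u = piA p.
Proof. by exists (repr u); rewrite /piA reprK. Qed.

End Basic.

Section Points.
Variable C : numClosedFieldType.
Variables a b c : nat.
Local Notation A := (Aring C a b c).
Local Notation P := (PR C).
Local Notation piA := (@piA C a b c).
Local Notation xA := (@xA C a b c).
Local Notation yA := (@yA C a b c).
Local Notation zA := (@zA C a b c).
Local Notation io := (@io C a b c).

Definition eval3 (p : P) (x0 y0 z0 : C) : C := ((p.[z0%:P%:P]).[y0%:P]).[x0].

Lemma eval3D p q x0 y0 z0 : eval3 (p + q) x0 y0 z0 = eval3 p x0 y0 z0 + eval3 q x0 y0 z0.
Proof. by rewrite /eval3 !hornerD. Qed.
Lemma eval3M p q x0 y0 z0 : eval3 (p * q) x0 y0 z0 = eval3 p x0 y0 z0 * eval3 q x0 y0 z0.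
Proof. by rewrite /eval3 !hornerM. Qed.
Lemma eval3X x0 y0 z0 : eval3 (varX C) x0 y0 z0 = x0.
Proof. by rewrite /eval3 /varX !hornerC hornerX. Qed.
Lemma eval3Y x0 y0 z0 : eval3 (varY C) x0 y0 z0 = y0.
Proof. by rewrite /eval3 /varY hornerC hornerX hornerC. Qed.
Lemma eval3Z x0 y0 z0 : eval3 (varZ C) x0 y0 z0 = z0.
Proof. by rewrite /eval3 /varZ hornerX !hornerC. Qed.
Lemma eval3C k x0 y0 z0 : eval3 (const k) x0 y0 z0 = k.
Proof. by rewrite /eval3 /const !hornerC. Qed.

Definition is_pt (psi : A -> C) :=
  [/\ forall u v, psi (u + v) = psi u + psi v,
      forall u v, psi (u * v) = psi u * psi v & forall k, psi (io k) = k].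

Lemma pt_eval psi : is_pt psi ->
  forall p, psi (piA p) = eval3 p (psi xA) (psi yA) (psi zA).
Proof.
case=> hD hM hC; elim/PR_ind.
- by move=> k; rewrite piC hC eval3C.
- by move=> p q Hp Hq; rewrite piAD hD eval3D Hp Hq.
- by move=> p Hp; rewrite piAM hM eval3M Hp eval3X.
- by move=> p Hp; rewrite piAM hM eval3M Hp eval3Y.
- by move=> p Hp; rewrite piAM hM eval3M Hp eval3Z.
Qed.

Lemma pt0 psi : is_pt psi -> psi 0 = 0.
Proof. by case=> hD _ _; apply: (addrI (psi 0)); rewrite -hD !addr0. Qed.

Lemma der_gen_zero (T : nzRingType) (h : A -> T) (d : A -> T) :
  (forall u v, d (u + v) = d u + d v) ->
  (forall u v, d (u * v) = d u * h v + h u * d v) ->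
  (forall k, d (io k) = 0) -> d xA = 0 -> d yA = 0 -> d zA = 0 ->
  forall u, d u = 0.
Proof.
move=> hD hM hC hx hy hz u; have [p ->] := pi_surj u; elim/PR_ind: p.
- by move=> k; rewrite piC hC.
- by move=> p q Hp Hq; rewrite piAD hD Hp Hq addr0.
- by move=> p Hp; rewrite piAM hM Hp hx mul0r mulr0 addr0.
- by move=> p Hp; rewrite piAM hM Hp hy mul0r mulr0 addr0.
- by move=> p Hp; rewrite piAM hM Hp hz mul0r mulr0 addr0.
Qed.

End Points.

Section Deriv.
Variable C : numClosedFieldType.
Variables a b c : nat.
Local Notation A := (Aring C a b c).
Local Notation P := (PR C).
Local Notation piA := (@piA C a b c).
Local Notation xA := (@xA C a b c).
Local Notation yA := (@yA C a b c).
Local Notation zA := (@zA C a b c).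
Local Notation io := (@io C a b c).
Local Notation is_pt := (@is_pt C a b c).

Variable D : A -> A.
Hypothesis HD : is_derivation (@iotaA C a b c) D.
Hypothesis HL : locally_nilpotent D.

Lemma DD u v : D (u + v) = D u + D v. Proof. by case: HD => h _ _; apply: h. Qed.
Lemma DM u v : D (u * v) = D u * v + u * D v. Proof. by case: HD => _ _ h; apply: h. Qed.
Lemma DC k u : D (io k * u) = io k * D u. Proof. by case: HD => _ h _; apply: h. Qed.
Lemma D0 : D 0 = 0. Proof. by apply: (addrI (D 0)); rewrite -DD !addr0. Qed.
Lemma D1 : D 1 = 0.
Proof. have H := DM 1 1; rewrite !mulr1 !mul1r in H. by apply: (addrI (D 1)); rewrite addr0 -H. Qed.
Lemma Dio k : D (io k) = 0.
Proof. by rewrite -[io k]mulr1 DC D1 mulr0. Qed.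
Lemma DN u : D (- u) = - D u.
Proof. by apply: (addrI (D u)); rewrite -DD !subrr D0. Qed.
Lemma DB u v : D (u - v) = D u - D v. Proof. by rewrite DD DN. Qed.
Lemma DX u n : D (u ^+ n.+1) = (u ^+ n * D u) *+ n.+1.
Proof.
elim: n => [|n IH]; first by rewrite expr1 expr0 mul1r.
by rewrite exprS DM IH mulrnAr mulrA -exprS [D u * _]mulrC -mulrS.
Qed.
Lemma Dn n : D n%:R = 0.
Proof. by elim: n => [|n IH]; rewrite ?D0 // mulrS DD D1 IH addr0. Qed.

Lemma iterDD n u v : iter n D (u + v) = iter n D u + iter n D v.
Proof. by elim: n => //= n ->; rewrite DD. Qed.
Lemma iterD0 n : iter n D 0 = 0.
Proof. by elim: n => //= n ->; rewrite D0. Qed.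

Lemma HL' u : exists n, iter n D u == 0.
Proof. by have [n H] := HL u; exists n; apply/eqP. Qed.

Definition N u := ex_minn (HL' u).

Lemma iter_N u m : (N u <= m)%N -> iter m D u = 0.
Proof.
rewrite /N; case: ex_minnP => n /eqP Hn _ /subnK <-.
by elim: (m - n)%N => //= k ->; rewrite D0.
Qed.

Lemma N0 u : N u = 0%N -> u = 0.
Proof. by move=> H; have := @iter_N u 0; rewrite H; apply. Qed.

Lemma N_D u : u != 0 -> (N (D u) < N u)%N.
Proof.
move=> u0; have Hp : (0 < N u)%N by rewrite lt0n; apply/eqP => /N0/eqP; rewrite (negbTE u0).
rewrite /(N (D u)); case: ex_minnP => n _ /(_ (N u).-1) H.
have h1 : (n <= (N u).-1)%N.
  by apply: H; apply/eqP; rewrite -iterSr prednK //; exact: iter_N.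
by rewrite (leq_ltn_trans h1) // ltn_predL.
Qed.

Variable psi : A -> C.
Hypothesis Hpsi : is_pt psi.

Definition Phi u : {poly C} := \poly_(i < N u) (psi (iter i D u) / (i`!)%:R).

Lemma coefPhi u i : (Phi u)`_i = psi (iter i D u) / (i`!)%:R.
Proof.
rewrite coef_poly; case: ltnP => // H.
by rewrite iter_N // (pt0 Hpsi) mul0r.
Qed.

Lemma PhiD u v : Phi (u + v) = Phi u + Phi v.
Proof.
case: Hpsi => hD _ _.
by apply/polyP => i; rewrite coefD !coefPhi iterDD hD mulrDl.
Qed.

Lemma Phi0 : Phi 0 = 0.
Proof. by apply/polyP => i; rewrite coefPhi iterD0 (pt0 Hpsi) mul0r coef0. Qed.

Lemma PhiDer u : Phi (D u) = (Phi u)^`().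
Proof.
apply/polyP => i; rewrite coef_deriv !coefPhi -iterSr factS natrM.
rewrite -[X in _ = X]mulr_natr -mulrA; congr (_ * _).
by rewrite invfM mulrAC mulVf ?mul1r // pnatr_eq0.
Qed.

Lemma Phi_at0 u : (Phi u).[0] = psi u.
Proof. by rewrite horner_coef0 coefPhi /= divr1. Qed.

Lemma PhiC k : Phi (io k) = k%:P.
Proof.
case: Hpsi => _ _ hC.
apply/polyP => i; rewrite coefPhi coefC; case: i => [|i] /=; first by rewrite hC divr1.
by rewrite -iterS iterSr Dio iterD0 (pt0 Hpsi) mul0r.
Qed.

Lemma PhiM u v : Phi (u * v) = Phi u * Phi v.
Proof.
case: Hpsi => hD hM hC.
move: {2}(N u + N v)%N (leqnn (N u + N v)) => n.
elim: n u v => [|n IH] u v hn.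
  have -> : u = 0 by apply: N0; move: hn; rewrite leqn0 addn_eq0 => /andP [/eqP].
  by rewrite mul0r Phi0 mul0r.
case: (eqVneq u 0) => [->|u0]; first by rewrite mul0r Phi0 mul0r.
case: (eqVneq v 0) => [->|v0]; first by rewrite mulr0 Phi0 mulr0.
apply: deriv_inj; last by rewrite hornerM !Phi_at0 hM.
rewrite -PhiDer DM PhiD derivM -!PhiDer; congr (_ + _); apply: IH.
  by rewrite -ltnS (leq_trans _ hn) // ltn_add2r N_D.
by rewrite -ltnS (leq_trans _ hn) // ltn_add2l N_D.
Qed.

Lemma Phi_iter k u : Phi (iter k D u) = (Phi u)^`(k).
Proof. elim: k => [|k IH]; first by rewrite derivn0. by rewrite derivnS -IH /= PhiDer. Qed.

Lemma pt_t (t0 : C) : is_pt (fun u => (Phi u).[t0]).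
Proof. by split=> [u v|u v|k]; rewrite ?PhiD ?PhiM ?PhiC ?hornerD ?hornerM ?hornerC. Qed.

End Deriv.

Definition tl (R : nzRingType) (p : {poly R}) : {poly R} := \poly_(i < size p) p`_i.+1.

Lemma coef_tl (R : nzRingType) (p : {poly R}) i : (tl p)`_i = p`_i.+1.
Proof.
rewrite coef_poly; case: ltnP => // H.
by rewrite nth_default // (leq_trans H).
Qed.

Lemma tl_split (R : nzRingType) (p : {poly R}) : p = (p`_0)%:P + 'X * tl p.
Proof.
apply/polyP => i; rewrite coefD coefC coefXM; case: i => [|i] /=.
  by rewrite addr0.
by rewrite add0r coef_tl.
Qed.

Lemma tl0 (R : nzRingType) : tl (0 : {poly R}) = 0.
Proof. by apply/polyP => i; rewrite coef_tl !coef0. Qed.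

Section EV.
Variable C : numClosedFieldType.
Variables a b c : nat.
Local Notation A := (Aring C a b c).
Local Notation P := (PR C).
Local Notation piA := (@piA C a b c).
Local Notation xA := (@xA C a b c).
Local Notation yA := (@yA C a b c).
Local Notation zA := (@zA C a b c).
Local Notation io := (@io C a b c).
Local Notation is_pt := (@is_pt C a b c).
Local Notation f := (fXYZ C a b c).

Lemma eval3N (p : P) x0 y0 z0 : eval3 (- p) x0 y0 z0 = - eval3 p x0 y0 z0.
Proof.
have -> : - p = const (-1) * p by rewrite /const !polyCN !polyC1 mulN1r.
by rewrite eval3M eval3C mulN1r.
Qed.

Lemma eval3B (p q : P) x0 y0 z0 : eval3 (p - q) x0 y0 z0 = eval3 p x0 y0 z0 - eval3 q x0 y0 z0.
Proof. by rewrite eval3D eval3N. Qed.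

Lemma eval3Xn (p : P) n x0 y0 z0 : eval3 (p ^+ n) x0 y0 z0 = (eval3 p x0 y0 z0) ^+ n.
Proof.
elim: n => [|n IH]; last by rewrite !exprS eval3M IH.
have e1 : (1 : P) = const 1 by rewrite /const !polyC1.
by rewrite !expr0 e1 eval3C.
Qed.

Lemma eval3f x0 y0 z0 : eval3 f x0 y0 z0 = x0 ^+ a * y0 ^+ b - z0 ^+ c.
Proof. by rewrite /fXYZ eval3B eval3M !eval3Xn eval3X eval3Y eval3Z. Qed.

Variables x0 y0 z0 : C.
Hypothesis hV : x0 ^+ a * y0 ^+ b = z0 ^+ c.

Definition ev (u : A) : C := eval3 (repr u) x0 y0 z0.

Lemma ev_pi p : ev (piA p) = eval3 p x0 y0 z0.
Proof.
have [H _] := @piAE C a b c (repr (piA p)) p.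
have [h eh] := H (reprK (piA p)).
apply/eqP; rewrite -subr_eq0; apply/eqP.
by rewrite /ev -eval3B eh eval3M eval3f hV subrr mulr0.
Qed.

Lemma ev_pt : is_pt ev.
Proof.
split.
- move=> u v; have [p ->] := pi_surj u; have [q ->] := pi_surj v.
  by rewrite -piAD !ev_pi eval3D.
- move=> u v; have [p ->] := pi_surj u; have [q ->] := pi_surj v.
  by rewrite -piAM !ev_pi eval3M.
- by move=> k; rewrite -piC ev_pi eval3C.
Qed.

Lemma ev_x : ev xA = x0. Proof. by rewrite ev_pi eval3X. Qed.
Lemma ev_y : ev yA = y0. Proof. by rewrite ev_pi eval3Y. Qed.
Lemma ev_z : ev zA = z0. Proof. by rewrite ev_pi eval3Z. Qed.

End EV.

Lemma EV0_lemma (C : numClosedFieldType) (a b c : nat) : (0 < a)%N -> (0 < c)%N ->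
  exists psi, [/\ @is_pt C a b c psi, psi (xA C a b c) = 0, psi (yA C a b c) = 0
                & psi (zA C a b c) = 0].
Proof.
move=> a0 c0.
have hV : (0 : C) ^+ a * 0 ^+ b = 0 ^+ c by rewrite !expr0n (negbTE (lt0n_neq0 a0)) (negbTE (lt0n_neq0 c0)) mul0r.
by exists (@ev C a b c 0 0 0); split; [exact: (ev_pt hV) | exact: (ev_x hV) | exact: (ev_y hV) | exact: (ev_z hV)].
Qed.

Section Fs.
Variable C : numClosedFieldType.
Variables a b c : nat.
Hypotheses (ha : (2 <= a)%N) (hb : (2 <= b)%N) (hc : (2 <= c)%N).
Local Notation A := (Aring C a b c).
Local Notation P := (PR C).
Local Notation R2 := {poly {poly C}}.
Local Notation piA := (@piA C a b c).
Local Notation xA := (@xA C a b c).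
Local Notation yA := (@yA C a b c).
Local Notation zA := (@zA C a b c).
Local Notation f := (fXYZ C a b c).

Variable D : A -> A.
Hypothesis HD : is_derivation (@iotaA C a b c) D.

Definition K1 : R2 := ('X^(a.-1))%:P * 'X^b.
Definition K3 : R2 := ('X^a)%:P * 'X^(b.-1).
Definition K2 : R2 := ('X^a)%:P * 'X^b.

Lemma DXn u n : (0 < n)%N -> D (u ^+ n) = (u ^+ n.-1 * D u) *+ n.
Proof. by case: n => // n _; rewrite (DX HD). Qed.

Lemma piK (k m : nat) : piA ((('X^k)%:P * 'X^m : R2)%:P) = xA ^+ k * yA ^+ m.
Proof.
by rewrite rmorphM !rmorphXn piAM !piAX.
Qed.

Lemma lift_eq p q r : D xA = piA p -> D yA = piA q -> D zA = piA r ->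
  exists h, (K1%:P * p) *+ a + (K3%:P * q) *+ b - ('X^(c.-1) * r) *+ c = h * f.
Proof.
have a0 : (0 < a)%N by apply: leq_trans ha.
have b0 : (0 < b)%N by apply: leq_trans hb.
have c0 : (0 < c)%N by apply: leq_trans hc.
move=> ep eq er; apply/piAE.
rewrite piAD !piAMn !piAM /K1 /K3 !piK piAX -ep -eq -er.
rewrite -(DXn _ c0) -relA (DM HD) !DXn // mulrnAl mulrnAr.
by rewrite mulrAC mulrA.
Qed.


Lemma coefK (k : {poly C}) (m : nat) (u : R2) i :
  ((k%:P * 'X^m) * u)`_i = k * (if (i < m)%N then 0 else u`_(i - m)).
Proof. by rewrite -mulrA coefCM coefXnM. Qed.

Lemma ef : f = K2%:P - 'X^c.
Proof. by rewrite /fXYZ /K2 rmorphM !rmorphXn. Qed.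

Lemma coef_hf (h : P) k : (k < c)%N -> (h * f)`_k = h`_k * K2.
Proof. by move=> hk; rewrite ef mulrBr coefB coefMC coefMXn hk subr0. Qed.

Lemma E_eqs p q r : D xA = piA p -> D yA = piA q -> D zA = piA r ->
  exists h : P,
  K1 * p`_0 *+ a + K3 * q`_0 *+ b = h`_0 * K2 /\
  K1 * p`_(c.-1) *+ a + K3 * q`_(c.-1) *+ b - r`_0 *+ c = h`_(c.-1) * K2.
Proof.
have c0 : (0 < c)%N by apply: leq_trans hc.
move=> ep eq er; have [h eh] := lift_eq ep eq er; exists h; split.
  have := congr1 (fun u : P => u`_0) eh => /=.
  rewrite coef_hf // coefB coefD !coefMn !coefCM coefXnM.
  by rewrite (_ : (0 < c.-1)%N) ?mul0rn ?subr0 // -subn1 subn_gt0.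
have := congr1 (fun u : P => u`_(c.-1)) eh => /=.
rewrite coef_hf ?prednK ?leqnn // coefB coefD !coefMn !coefCM coefXnM.
by rewrite ltnn subnn.
Qed.


Lemma mulrn_a0 (R : numDomainType) (u : R) n : (0 < n)%N -> u *+ n = 0 -> u = 0.
Proof. by move=> n0 /eqP; rewrite mulrn_eq0 (negbTE (lt0n_neq0 n0)) => /eqP. Qed.

Lemma mulrn_p0 (u : {poly C}) n : (0 < n)%N -> u *+ n = 0 -> u = 0.
Proof.
move=> n0 H; apply/polyP => i; rewrite coef0; apply: (mulrn_a0 n0).
by rewrite -coefMn H coef0.
Qed.

Lemma coefF1 (p0 q0 h0 : R2) : K1 * p0 *+ a + K3 * q0 *+ b = h0 * K2 ->
  forall j, (p0`_j)`_0 = 0.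
Proof.
have a0 : (0 < a)%N by apply: leq_trans ha.
have b0 : (0 < b)%N by apply: leq_trans hb.
move=> E j; have := congr1 (fun u : R2 => (u`_(j + b))`_(a.-1)) E => /=.
rewrite [h0 * K2]mulrC /K1 /K3 /K2 coefD !coefMn !coefK.
rewrite ltnNge leq_addl /= ltnNge (leq_trans (leq_pred b) (leq_addl j b)) /= addnK.
rewrite coefD !coefMn !coefXnM ltnn subnn ltn_predL a0 mul0rn addr0.
by move/(mulrn_a0 a0).
Qed.

Lemma coefF3 (p0 q0 h0 : R2) : K1 * p0 *+ a + K3 * q0 *+ b = h0 * K2 ->
  q0`_0 = 0.
Proof.
have b0 : (0 < b)%N by apply: leq_trans hb.
move=> E; have := congr1 (fun u : R2 => u`_(b.-1)) E => /=.
rewrite [h0 * K2]mulrC /K1 /K3 /K2 coefD !coefMn !coefK ltn_predL b0 ltnn subnn.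
rewrite !mulr0 mul0rn add0r => /(mulrn_p0 b0) /eqP.
by rewrite mulf_eq0 expf_eq0 polyX_eq0 andbF /= => /eqP.
Qed.

Lemma coefF2 (pc qc r0 h1 : R2) :
  K1 * pc *+ a + K3 * qc *+ b - r0 *+ c = h1 * K2 -> forall j, (r0`_j)`_0 = 0.
Proof.
have a0 : (0 < a)%N by apply: leq_trans ha.
have a1 : (0 < a.-1)%N by rewrite -subn1 subn_gt0.
have c0 : (0 < c)%N by apply: leq_trans hc.
move=> E j; have := congr1 (fun u : R2 => (u`_j)`_0) E => /=.
rewrite [h1 * K2]mulrC /K1 /K3 /K2 !(coefB, coefD, coefMn, coefK, coefN) !coefXnM a1 a0.
rewrite !mul0rn add0r sub0r.
by move/eqP; rewrite oppr_eq0 => /eqP /(mulrn_a0 c0).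
Qed.

Lemma coefF4 (pc qc r0 h1 : R2) :
  K1 * pc *+ a + K3 * qc *+ b - r0 *+ c = h1 * K2 -> r0`_0 = 0.
Proof.
have b0 : (0 < b)%N by apply: leq_trans hb.
have b1 : (0 < b.-1)%N by rewrite -subn1 subn_gt0.
have c0 : (0 < c)%N by apply: leq_trans hc.
move=> E; have := congr1 (fun u : R2 => u`_0) E => /=.
rewrite [h1 * K2]mulrC /K1 /K3 /K2 !(coefB, coefD, coefMn, coefK) b0 b1 !mulr0 !mul0rn add0r sub0r.
by move/eqP; rewrite oppr_eq0 => /eqP /(mulrn_p0 c0).
Qed.


Lemma splitX (u : R2) : (forall j, (u`_j)`_0 = 0) ->
  u = ('X : {poly C})%:P * \poly_(j < size u) tl (u`_j).
Proof.
move=> H; apply/polyP => j; rewrite coefCM coef_poly.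
case: ltnP => hj; last by rewrite nth_default // mulr0.
by rewrite {1}(tl_split (u`_j)) H add0r.
Qed.

Lemma decompX (p : P) : (forall j, ((p`_0)`_j)`_0 = 0) ->
  exists g h, piA p = xA * g + zA * h.
Proof.
move=> H; exists (piA (\poly_(j < size p`_0) tl ((p`_0)`_j))%:P), (piA (tl p)).
by rewrite {1}(tl_split p) {1}(splitX H) rmorphM piAD !piAM.
Qed.

Lemma decompY (p : P) : (p`_0)`_0 = 0 ->
  exists g h, piA p = yA * g + zA * h.
Proof.
move=> H; exists (piA (tl (p`_0))%:P), (piA (tl p)).
by rewrite {1}(tl_split p) {1}(tl_split (p`_0)) H add0r rmorphM piAD !piAM.
Qed.

Lemma F1 : exists g h, D xA = xA * g + zA * h.
Proof.
have [p ep] := pi_surj (D xA); have [q eq] := pi_surj (D yA).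
have [r er] := pi_surj (D zA).
have [h [E0 _]] := E_eqs ep eq er.
by rewrite ep; apply: decompX; apply: coefF1 E0.
Qed.

Lemma F3 : exists g h, D yA = yA * g + zA * h.
Proof.
have [p ep] := pi_surj (D xA); have [q eq] := pi_surj (D yA).
have [r er] := pi_surj (D zA).
have [h [E0 _]] := E_eqs ep eq er.
by rewrite eq; apply: decompY; apply: coefF3 E0.
Qed.

Lemma F2 : exists g h, D zA = xA * g + zA * h.
Proof.
have [p ep] := pi_surj (D xA); have [q eq] := pi_surj (D yA).
have [r er] := pi_surj (D zA).
have [h [_ E1]] := E_eqs ep eq er.
by rewrite er; apply: decompX; apply: coefF2 E1.
Qed.

Lemma F4 : exists g h, D zA = yA * g + zA * h.
Proof.
have [p ep] := pi_surj (D xA); have [q eq] := pi_surj (D yA).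
have [r er] := pi_surj (D zA).
have [h [_ E1]] := E_eqs ep eq er.
by rewrite er; apply: decompY; apply: coefF4 E1.
Qed.

End Fs.

Section NSsec.
Variable C : numClosedFieldType.
Local Notation R2 := {poly {poly C}}.

Lemma poly_vanish_nz (p : {poly C}) : (forall t, t != 0 -> p.[t] = 0) -> p = 0.
Proof.
move=> H; apply/eqP; apply/negPn/negP => p0.
suff : (size [seq (i.+1%:R : C) | i <- iota 0 (size p)] < size p)%N.
  by rewrite size_map size_iota ltnn.
apply: (max_poly_roots p0).
  apply/allP => t /mapP [i _ ->]; rewrite /root H //.
  by rewrite pnatr_eq0.
rewrite map_inj_uniq ?iota_uniq // => i j /(mulrIn (oner_neq0 C)).
by case.
Qed.

Lemma vanish2 (u : R2) :
  (forall x0 y0, x0 != 0 -> y0 != 0 -> (u.[y0%:P]).[x0] = 0) -> u = 0.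
Proof.
move=> H; apply/polyP => j; rewrite coef0; apply: poly_vanish_nz => x0 hx0.
have H0 : map_poly (horner_eval x0) u = 0.
  apply: poly_vanish_nz => y0 hy0.
  rewrite (_ : y0 = horner_eval x0 y0%:P); last by rewrite horner_evalE hornerC.
  by rewrite horner_map /= horner_evalE H.
by rewrite -horner_evalE -coef_map H0 coef0.
Qed.


Lemma roots_c (c : nat) (m : C) : (0 < c)%N -> m != 0 ->
  exists rs : seq C, [/\ uniq rs, size rs = c & forall z, z \in rs -> z ^+ c = m].
Proof.
move=> c0 m0.
have [rs ers] := closed_field_poly_normal ('X^c - m%:P : {poly C}).
rewrite lead_coefXnsubC // scale1r in ers.
exists rs; split.
- rewrite -separable_prod_XsubC -ers unlock.
  apply/Bezout_eq1_coprimepP; exists ((- m^-1)%:P, (m^-1 / c%:R)%:P * 'X) => /=.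
  rewrite derivB derivXn derivC subr0.
  have t1 : (- m^-1)%:P * ('X^c - m%:P) = 1 - (m^-1)%:P * 'X^c.
    by rewrite mulrBr -polyCM mulNr mulVf // !polyCN polyC1 opprK mulNr addrC.
  have t2 : (m^-1 / c%:R)%:P * 'X * ('X^(c.-1) *+ c) = (m^-1)%:P * 'X^c.
    rewrite mulrnAr -mulrA -exprS prednK // -mulrnAl -polyCMn.
    by rewrite -[(m^-1 / c%:R) *+ c]mulr_natr divfK // pnatr_eq0 -lt0n.
  by rewrite t1 t2 subrK.
- have := size_prod_XsubC rs id; rewrite -ers size_XnsubC //.
  by case.
- move=> z hz; have := root_prod_XsubC rs z; rewrite hz -ers.
  by rewrite /root !hornerE subr_eq0 => /eqP.
Qed.

End NSsec.

Section NSmain.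
Variable C : numClosedFieldType.
Variables a b c : nat.
Hypotheses (ha : (2 <= a)%N) (hb : (2 <= b)%N) (hc : (2 <= c)%N).
Local Notation A := (Aring C a b c).
Local Notation P := (PR C).
Local Notation R2 := {poly {poly C}}.
Local Notation piA := (@piA C a b c).
Local Notation is_pt := (@is_pt C a b c).
Local Notation f := (fXYZ C a b c).

Lemma NS (u : A) : (forall psi, is_pt psi -> psi u = 0) -> u = 0.
Proof.
have a0 : (0 < a)%N by apply: leq_trans ha.
have b0 : (0 < b)%N by apply: leq_trans hb.
have c0 : (0 < c)%N by apply: leq_trans hc.
have [p ->] := pi_surj u; move=> H.
have Hp : forall x0 y0 z0, x0 ^+ a * y0 ^+ b = z0 ^+ c -> eval3 p x0 y0 z0 = 0.
  move=> x0 y0 z0 hV; rewrite -(ev_pi hV); by move: (ev_pt hV) => /H.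
pose g : P := 'X^c - (K2 C a b)%:P.
have gf : g = - f by rewrite (ef C a b c) opprB.
have gm : g \is monic by apply: monicXnsubC.
have ediv := Pdiv.RingMonic.rdivp_eq gm p.
set d := Pdiv.CommonRing.rdivp p g in ediv.
set r := Pdiv.CommonRing.rmodp p g in ediv.
have hr : (size r <= c)%N.
  have := Pdiv.Ring.ltn_rmodp p g; rewrite /g size_XnsubC // ltnS => ->.
  by rewrite -size_poly_eq0 size_XnsubC.
have rV : forall x0 y0 z0, x0 ^+ a * y0 ^+ b = z0 ^+ c -> eval3 r x0 y0 z0 = 0.
  move=> x0 y0 z0 hV; have := Hp x0 y0 z0 hV.
  by rewrite {1}ediv eval3D eval3M gf eval3N eval3f hV subrr oppr0 mulr0 add0r.
suff r0 : r = 0.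
  by apply/piAE0; exists (- d); rewrite {1}ediv r0 addr0 gf mulrN mulNr.
apply/polyP => k; rewrite coef0; apply: vanish2 => x0 y0 hx hy.
pose m := x0 ^+ a * y0 ^+ b.
have m0 : m != 0 by rewrite mulf_neq0 // expf_neq0.
have [rs [urs srs hrs]] := roots_c c0 m0.
pose phi := (horner_eval x0 \o horner_eval y0%:P : {rmorphism R2 -> C}).
have R0E : forall z, (map_poly phi r).[z] = eval3 r x0 y0 z.
  move=> z; rewrite {1}(_ : z = phi (z%:P%:P)); last first.
    by rewrite /= !horner_evalE !hornerC.
  by rewrite horner_map /= !horner_evalE.
have R00 : map_poly phi r = 0.
  apply/eqP; apply/negPn/negP => nz.
  have Hall : all (root (map_poly phi r)) rs.
    by apply/allP => z hz; rewrite /root R0E rV // hrs.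
  have := max_poly_roots nz Hall urs.
  rewrite srs ltnNge; move/negP; apply.
  apply: leq_trans hr; apply/leq_sizeP => j hj.
  by rewrite coef_map nth_default //; exact: rmorph0.
have := congr1 (fun q : {poly C} => q`_k) R00 => /=.
by rewrite coef_map coef0 /= !horner_evalE.
Qed.

End NSmain.

Section Main.
Variable C : numClosedFieldType.
Variables a b c : nat.
Hypotheses (ha : (2 <= a)%N) (hb : (2 <= b)%N) (hc : (2 <= c)%N).
Local Notation A := (Aring C a b c).
Local Notation P := (PR C).
Local Notation piA := (@piA C a b c).
Local Notation xA := (@xA C a b c).
Local Notation yA := (@yA C a b c).
Local Notation zA := (@zA C a b c).
Local Notation io := (@io C a b c).
Local Notation is_pt := (@is_pt C a b c).

Variable D : A -> A.
Hypothesis HD : is_derivation (@iotaA C a b c) D.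
Hypothesis HL : locally_nilpotent D.

Hypothesis hF1 : exists g h, D xA = xA * g + zA * h.
Hypothesis hF2 : exists g h, D zA = xA * g + zA * h.
Hypothesis hF3 : exists g h, D yA = yA * g + zA * h.
Hypothesis hF4 : exists g h, D zA = yA * g + zA * h.
Hypothesis hEV0 : exists psi, [/\ is_pt psi, psi xA = 0, psi yA = 0 & psi zA = 0].

Local Notation Ph psi := (Phi HL psi).

Lemma pt_mul psi u v : is_pt psi -> psi (u * v) = psi u * psi v.
Proof. by case. Qed.
Lemma pt_add psi u v : is_pt psi -> psi (u + v) = psi u + psi v.
Proof. by case. Qed.

Lemma io1 : io 1 = 1.
Proof. by rewrite /io /iotaA -/(piA _) /const !polyC1 piA1. Qed.

Lemma pt1 psi : is_pt psi -> psi 1 = 1.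
Proof. by case=> _ _ h; rewrite -io1 h. Qed.

Lemma pt_exp psi u n : is_pt psi -> psi (u ^+ n) = psi u ^+ n.
Proof.
move=> hp; elim: n => [|n IH]; first by rewrite !expr0 pt1.
by rewrite !exprS pt_mul // IH.
Qed.

Lemma PhiX psi (hp : is_pt psi) u n : Ph psi (u ^+ n) = (Ph psi u) ^+ n.
Proof.
elim: n => [|n IH]; first by rewrite !expr0 -io1 (PhiC HD HL hp).
by rewrite !exprS (PhiM HD HL hp) IH.
Qed.

Lemma coef0Phi psi (hp : is_pt psi) u : (Ph psi u)`_0 = psi u.
Proof. by rewrite -horner_coef0 (Phi_at0 HD HL hp). Qed.



Lemma stepA psi : is_pt psi -> psi xA = 0 -> psi zA = 0 -> psi (D yA) = 0.
Proof.
move=> hp hx hz.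
have [g1 [h1 e1]] := hF1; have [g2 [h2 e2]] := hF2.
have [X0 Z0] : Ph psi xA = 0 /\ Ph psi zA = 0.
  apply: (@ode_zero _ _ _ (Ph psi g1) (Ph psi h1) (Ph psi g2) (Ph psi h2)).
  - by rewrite -(PhiDer HD HL hp) e1 (PhiD HD HL hp) !(PhiM HD HL hp).
  - by rewrite -(PhiDer HD HL hp) e2 (PhiD HD HL hp) !(PhiM HD HL hp).
  - by rewrite coef0Phi.
  - by rewrite coef0Phi.
have [p ep] := pi_surj (D yA).
pose gp := map_poly (horner_eval 0) (p.[0]).
have gE : forall s, gp.[s] = eval3 p 0 s 0.
  move=> s; rewrite /gp /eval3 {1}(_ : s = horner_eval 0 s%:P); last first.
    by rewrite horner_evalE hornerC.
  by rewrite horner_map /= horner_evalE !polyC0.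
set Y := Ph psi yA.
have eY : Y^`() = gp \Po Y.
  apply/eqP; rewrite -subr_eq0; apply/eqP; apply: poly_vanish => t.
  rewrite hornerD hornerN horner_comp gE -(PhiDer HD HL hp) ep.
  rewrite (pt_eval (pt_t HD HL hp t)) X0 Z0 horner0 subrr //.
have g0 : gp.[0] = 0.
  have [psi0 [hp0 hx0 hy0 hz0]] := hEV0.
  rewrite gE; have := pt_eval hp0 p; rewrite hx0 hy0 hz0 -ep => <-.
  have [g3 [h3 ->]] := hF3.
  by rewrite pt_add // !pt_mul // hy0 hz0 !mul0r addr0.
have := comp_ode eY g0.
by rewrite -(PhiDer HD HL hp) => /(congr1 (horner^~ 0)); rewrite (Phi_at0 HD HL hp) horner0.
Qed.


Lemma stepA' psi : is_pt psi -> psi yA = 0 -> psi zA = 0 -> psi (D xA) = 0.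
Proof.
move=> hp hy hz.
have [g1 [h1 e1]] := hF3; have [g2 [h2 e2]] := hF4.
have [Y0 Z0] : Ph psi yA = 0 /\ Ph psi zA = 0.
  apply: (@ode_zero _ _ _ (Ph psi g1) (Ph psi h1) (Ph psi g2) (Ph psi h2)).
  - by rewrite -(PhiDer HD HL hp) e1 (PhiD HD HL hp) !(PhiM HD HL hp).
  - by rewrite -(PhiDer HD HL hp) e2 (PhiD HD HL hp) !(PhiM HD HL hp).
  - by rewrite coef0Phi.
  - by rewrite coef0Phi.
have [p ep] := pi_surj (D xA).
pose gp := (p.[0]).[0].
have gE : forall s, gp.[s] = eval3 p s 0 0.
  by move=> s; rewrite /gp /eval3 !polyC0.
set X := Ph psi xA.
have eX : X^`() = gp \Po X.
  apply/eqP; rewrite -subr_eq0; apply/eqP; apply: poly_vanish => t.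
  rewrite hornerD hornerN horner_comp gE -(PhiDer HD HL hp) ep.
  rewrite (pt_eval (pt_t HD HL hp t)) Y0 Z0 horner0 subrr //.
have g0 : gp.[0] = 0.
  have [psi0 [hp0 hx0 hy0 hz0]] := hEV0.
  rewrite gE; have := pt_eval hp0 p; rewrite hx0 hy0 hz0 -ep => <-.
  have [g3 [h3 ->]] := hF1.
  by rewrite pt_add // !pt_mul // hx0 hz0 !mul0r addr0.
have := comp_ode eX g0.
by rewrite -(PhiDer HD HL hp) => /(congr1 (horner^~ 0)); rewrite (Phi_at0 HD HL hp) horner0.
Qed.

Lemma ptD_gen psi : is_pt psi -> psi (D xA) = 0 -> psi (D yA) = 0 ->
  psi (D zA) = 0 -> forall u, psi (D u) = 0.
Proof.
move=> hp hx hy hz; apply: (@der_gen_zero C a b c C psi (fun u => psi (D u))) => //.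
- by move=> u v; rewrite (DD HD) pt_add.
- by move=> u v; rewrite (DM HD) pt_add // !pt_mul.
- by move=> k; rewrite (Dio HD) (pt0 hp).
Qed.

Lemma stepB psi : is_pt psi -> psi xA = 0 -> psi zA = 0 -> forall u, psi (D u) = 0.
Proof.
move=> hp hx hz; refine (ptD_gen hp _ (stepA hp hx hz) _).
  by have [g [h ->]] := hF1; rewrite pt_add // !pt_mul // hx hz !mul0r addr0.
by have [g [h ->]] := hF2; rewrite pt_add // !pt_mul // hx hz !mul0r addr0.
Qed.

Lemma stepB' psi : is_pt psi -> psi yA = 0 -> psi zA = 0 -> forall u, psi (D u) = 0.
Proof.
move=> hp hy hz; refine (ptD_gen hp (stepA' hp hy hz) _ _).
  by have [g [h ->]] := hF3; rewrite pt_add // !pt_mul // hy hz !mul0r addr0.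
by have [g [h ->]] := hF4; rewrite pt_add // !pt_mul // hy hz !mul0r addr0.
Qed.

Lemma root_case psi (hp : is_pt psi) t0 :
  (forall u, (Ph psi (D u)).[t0] = 0) -> forall w, (Ph psi w)^`() = 0.
Proof.
move=> H w; apply: (@derivn_const C t0) => k k0.
by rewrite -(Phi_iter HD HL hp) -(prednK k0) iterS.
Qed.

Lemma stepC psi : is_pt psi ->
  [/\ (Ph psi xA)^`() = 0, (Ph psi yA)^`() = 0 & (Ph psi zA)^`() = 0].
Proof.
move=> hp.
have a0 : (0 < a)%N by apply: leq_trans ha. 
have b0 : (0 < b)%N by apply: leq_trans hb.
have c0 : (0 < c)%N by apply: leq_trans hc.
have hrel : forall t, ((Ph psi zA).[t]) ^+ c = ((Ph psi xA).[t]) ^+ a * ((Ph psi yA).[t]) ^+ b.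
  move=> t; have := congr1 (fun u => (Ph psi u).[t]) (@relA C a b c) => /=.
  by rewrite (PhiM HD HL hp) !(PhiX hp) hornerM !horner_exp => <-.
case: (leqP (size (Ph psi xA)) 1) => hX; last first.
  have [t0 r0] : exists t0, root (Ph psi xA) t0.
    by apply/closed_rootP; rewrite neq_ltn hX orbT.
  have hpt := pt_t HD HL hp t0.
  have hz : (Ph psi zA).[t0] = 0.
    apply/eqP; have : ((Ph psi zA).[t0]) ^+ c == 0.
      by rewrite hrel (eqP r0) expr0n eqn0Ngt a0 mul0r.
    by rewrite expf_eq0 c0.
  have := root_case hp (stepB hpt (eqP r0) hz).
  by move=> H; split; apply: H.
case: (leqP (size (Ph psi yA)) 1) => hY; last first.
  have [t0 r0] : exists t0, root (Ph psi yA) t0.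
    by apply/closed_rootP; rewrite neq_ltn hY orbT.
  have hpt := pt_t HD HL hp t0.
  have hz : (Ph psi zA).[t0] = 0.
    apply/eqP; have : ((Ph psi zA).[t0]) ^+ c == 0.
      by rewrite hrel (eqP r0) [0 ^+ b]expr0n eqn0Ngt b0 mulr0.
    by rewrite expf_eq0 c0.
  have := root_case hp (stepB' hpt (eqP r0) hz).
  by move=> H; split; apply: H.
split; try exact: size1_deriv.
apply: size1_deriv; apply: (exp_const c0).
rewrite -(PhiX hp) -relA (PhiM HD HL hp) !(PhiX hp).
rewrite (size1_polyC hX) (size1_polyC hY) -!rmorphXn -rmorphM.
by rewrite size_polyC leq_b1.
Qed.

Hypothesis hNS : forall u : A, (forall psi, is_pt psi -> psi u = 0) -> u = 0.

Lemma D_gens : [/\ D xA = 0, D yA = 0 & D zA = 0].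
Proof.
have H : forall w, (forall psi (hp : is_pt psi), (Ph psi w)^`() = 0) -> D w = 0.
  move=> w Hw; apply: hNS => psi hp.
  by rewrite -(Phi_at0 HD HL hp) (PhiDer HD HL hp) (Hw _ hp) horner0.
split; apply: H => psi hp; by case: (stepC hp).
Qed.

Lemma D_zero u : D u = 0.
Proof.
case: D_gens => hx hy hz.
apply: (@der_gen_zero C a b c A id D) => //.
- exact: (DD HD).
- exact: (DM HD).
- exact: (Dio HD).
Qed.

End Main.


Theorem theorem4p2 (C : numClosedFieldType) (a b c : nat)
  (ha : (2 <= a)%N) (hb : (2 <= b)%N) (hc : (2 <= c)%N) :
  rigid (@iotaA C a b c).
Proof.
move=> D HD HL u.
have a0 : (0 < a)%N by apply: leq_trans ha.
have c0 : (0 < c)%N by apply: leq_trans hc.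
apply: (D_zero ha hb hc HD HL (F1 ha hb hc HD) (F2 ha hb hc HD) (F3 ha hb hc HD)
  (F4 ha hb hc HD) (EV0_lemma C b a0 c0) (@NS C a b c ha hb hc)).
Qed.
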